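(* Let $t>0$ and $k\ge 1$ be constants, and let $p_0,p_1,p_2,p_3$ be real numbers with $0<p_i<1$ and $\sum_{i=0}^{3}p_i=1$. Define $T(n,r)$ for real $n\ge 0$ and integers $r\ge 0$ by $$T(n,r)=\begin{cases}1 & \text{if } n\le t k^r,\\ 1+\sum_{i=0}^{3} T\big(p_i(n-tk^r),\,r+1\big) & \text{if } n> t k^r.\end{cases}$$ Then, as $N\to\infty$, $T(N,0)\in\Theta(N^s)$, where $s$ is a real number with $0< s\le \frac{\log 4}{\log 4k}$ (namely the solution of $\sum_{i=0}^{3}p_i^s=k^s$).
   Context: $T(N,0)$ is the asymptotic space (number of counters) used by a DN-tree with parameters $k$ and $t$ after recording $N$ extent accesses: a tree vertex at level $r$ saturates at threshold $tk^r$, after which further accesses are distributed among its four children with probabilities $p_0,\dots,p_3$. The parameters $t,k,p_i$ are fixed as $N\to\infty$. *)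

(* Defs.v *)
From Stdlib Require Import Reals.
Open Scope R_scope.

(* DN-tree space recursion T(n,r), with an explicit fuel argument so that the
   recursion on real n is structural.  [Tf] returns 1 when fuel runs out;
   [T] supplies enough fuel (see below), so [T] satisfies exactly
     T(n,r) = 1                                   if n <= t k^r
     T(n,r) = 1 + sum_{i=0}^3 T(p_i (n - t k^r), r+1)   if n > t k^r
   whenever t > 0, k >= 1, 0 < p_i < 1. *)
Fixpoint Tf (fuel : nat) (t k : R) (p : nat -> R) (n : R) (r : nat) : R :=
  match fuel with
  | O => 1
  | S f =>
      if Rle_dec n (t * k ^ r) then 1
      else 1 + sum_f_R0 (fun i => Tf f t k p (p i * (n - t * k ^ r)) (S r)) 3
  end.

(* Each recursive step decreases n by at least t (since k >= 1 and p_i < 1),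
   so after more than n/t steps the argument is <= 0 <= t k^r.  Hence
   up(n/t) + 1 units of fuel always suffice. *)
Definition T (t k : R) (p : nat -> R) (n : R) (r : nat) : R :=
  Tf (Z.to_nat (up (n / t)) + 1) t k p n r.

(* Main.v *)
Require Import Defs.
From Stdlib Require Import Reals Lra Lia Psatz ZArith.
Open Scope R_scope.

Lemma exp_le' x y : x <= y -> exp x <= exp y.
Proof. intros [H|H]; [left; apply exp_increasing; auto | subst; lra]. Qed.

Lemma ln_le' x y : 0 < x -> x <= y -> ln x <= ln y.
Proof. intros Hx [H|H]; [left; apply ln_increasing; auto | subst; lra]. Qed.

Lemma exp_conv L s : 0 <= s <= 1 -> exp (s*L) <= 1 + s*(exp L - 1).
Proof.
  intros Hs.
  pose proof (exp_ineq1_le ((1-s)*L)) as H1.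
  pose proof (exp_ineq1_le (-(s*L))) as H2.
  assert (E1 : exp ((1-s)*L) * exp (s*L) = exp L) by (rewrite <- exp_plus; f_equal; ring).
  assert (E2 : exp (-(s*L)) * exp (s*L) = 1) by (rewrite <- exp_plus, <- exp_0; f_equal; ring).
  set (G := exp (s*L)) in *. assert (HG : 0 < G) by apply exp_pos.
  assert (A1 : G * (1 + (1-s)*L) <= exp L) by (rewrite <- E1; nra).
  assert (A2 : G * (1 - s*L) <= 1) by (rewrite <- E2; nra).
  nra.
Qed.

Lemma rp_nonpos x s : x <= 0 -> Rpower x s = 1.
Proof. intros H. unfold Rpower, ln. destruct (Rlt_dec 0 x); [exfalso; lra|]. rewrite Rmult_0_r; apply exp_0. Qed.

Lemma rp_le_1 x s : x <= 1 -> 0 <= s -> Rpower x s <= 1.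
Proof.
  intros H Hs. destruct (Rle_lt_dec x 0). rewrite rp_nonpos; lra.
  unfold Rpower. rewrite <- exp_0. apply exp_le'.
  assert (ln x <= 0) by (rewrite <- ln_1; apply ln_le'; lra). nra.
Qed.

Lemma rp_ge_self y s : 0 < y <= 1 -> 0 <= s <= 1 -> y <= Rpower y s.
Proof.
  intros Hy Hs. unfold Rpower. rewrite <- (exp_ln y) at 1 by lra. apply exp_le'.
  assert (ln y <= 0) by (rewrite <- ln_1; apply ln_le'; lra). nra.
Qed.

Lemma rp_mul a b s : 0 < a -> 0 < b -> Rpower (a*b) s = Rpower a s * Rpower b s.
Proof. intros; rewrite Rpower_mult_distr; auto. Qed.

Lemma rp_pos a s : 0 < Rpower a s.
Proof. apply exp_pos. Qed.

Lemma rp_one s : Rpower 1 s = 1.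
Proof. unfold Rpower; rewrite ln_1, Rmult_0_r; apply exp_0. Qed.

Lemma subadd a b s : 0 < a -> 0 < b -> 0 <= s <= 1 ->
  Rpower (a+b) s <= Rpower a s + Rpower b s.
Proof.
  intros Ha Hb Hs. set (c := a+b).
  assert (Ea : a = c * (a/c)) by (unfold c; field; lra).
  assert (Eb : b = c * (b/c)) by (unfold c; field; lra).
  assert (Hc : 0 < c) by (unfold c; lra).
  assert (Fa : a/c <= Rpower (a/c) s).
  { apply rp_ge_self; auto. split. apply Rdiv_lt_0_compat; lra.
    apply Rmult_le_reg_r with c; auto.
    replace (a/c*c) with a by (field; apply Rgt_not_eq; lra). unfold c; lra. }
  assert (Fb : b/c <= Rpower (b/c) s).
  { apply rp_ge_self; auto. split. apply Rdiv_lt_0_compat; lra.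
    apply Rmult_le_reg_r with c; auto.
    replace (b/c*c) with b by (field; apply Rgt_not_eq; lra). unfold c; lra. }
  assert (Hsum : a/c + b/c = 1) by (unfold c; field; apply Rgt_not_eq; lra).
  rewrite Ea, Eb.
  rewrite !rp_mul; try apply Rdiv_lt_0_compat; try lra.
  pose proof (rp_pos c s). nra.
Qed.

Lemma exists_s k p0 p1 p2 p3 : 1 <= k -> 0 < p0 -> 0 < p1 -> 0 < p2 -> 0 < p3 ->
  p0 + p1 + p2 + p3 = 1 ->
  exists s, 0 < s <= 1 /\ Rpower p0 s + Rpower p1 s + Rpower p2 s + Rpower p3 s = Rpower k s.
Proof.
  intros hk h0 h1 h2 h3 hs.
  set (f := fun s => exp (s * ln k) - (exp (s * ln p0) + exp (s * ln p1) + exp (s * ln p2) + exp (s * ln p3))).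
  assert (Hc : continuity f) by (apply derivable_continuous; unfold f; reg).
  assert (F0 : f 0 < 0) by (unfold f; rewrite !Rmult_0_l, exp_0; lra).
  assert (F1 : f 1 = k - 1) by (unfold f; rewrite !Rmult_1_l, !exp_ln by lra; lra).
  destruct (Req_dec k 1) as [Ek|Nk].
  - exists 1. split. lra. rewrite !Rpower_1 by lra. lra.
  - destruct (IVT f 0 1 Hc ltac:(lra) F0 ltac:(lra)) as [z [Hz Ez]].
    exists z. split.
    + split; [|lra]. destruct (Req_dec z 0) as [E|E]. subst; lra. lra.
    + unfold Rpower, f in *. lra.
Qed.

Lemma s_bound k p0 p1 p2 p3 s : 1 <= k -> 0 < p0 -> 0 < p1 -> 0 < p2 -> 0 < p3 ->
  p0 + p1 + p2 + p3 = 1 -> 0 < s <= 1 ->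
  Rpower p0 s + Rpower p1 s + Rpower p2 s + Rpower p3 s = Rpower k s ->
  s <= ln 4 / ln (4 * k).
Proof.
  intros hk h0 h1 h2 h3 hs Hs E.
  assert (K : forall q, 0 < q -> exp (s * ln 4) * Rpower q s <= 1 + s * (4*q - 1)).
  { intros q Hq. unfold Rpower. rewrite <- exp_plus.
    replace (s * ln 4 + s * ln q) with (s * ln (4*q)) by (rewrite ln_mult by lra; ring).
    pose proof (exp_conv (ln (4*q)) s ltac:(lra)) as H. rewrite exp_ln in H by lra. exact H. }
  pose proof (K _ h0). pose proof (K _ h1). pose proof (K _ h2). pose proof (K _ h3).
  assert (H4 : exp (s * ln 4) * Rpower k s <= 4) by (rewrite <- E; nra).
  unfold Rpower in H4. rewrite <- exp_plus in H4.
  assert (L4 : 0 < ln 4) by (rewrite <- ln_1; apply ln_increasing; lra).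
  assert (Lk : 0 <= ln k) by (rewrite <- ln_1; apply ln_le'; lra).
  assert (H5 : s * ln 4 + s * ln k <= ln 4).
  { rewrite <- (ln_exp (s * ln 4 + s * ln k)). apply ln_le'. apply exp_pos. exact H4. }
  rewrite ln_mult by lra.
  apply Rmult_le_reg_r with (ln 4 + ln k). lra.
  unfold Rdiv. rewrite Rmult_assoc, Rinv_l by (apply Rgt_not_eq; lra). lra.
Qed.

Section Tree.
Variables (t k s : R) (p : nat -> R).
Hypotheses (ht : 0 < t) (hk : 1 <= k) (hs : 0 < s <= 1)
  (h0 : 0 < p 0 < 1) (h1 : 0 < p 1 < 1) (h2 : 0 < p 2 < 1) (h3 : 0 < p 3 < 1)
  (hq : Rpower (p 0 / k) s + Rpower (p 1 / k) s + Rpower (p 2 / k) s + Rpower (p 3 / k) s = 1).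

Lemma Tf_S f n r : Tf (S f) t k p n r =
  if Rle_dec n (t * k ^ r) then 1 else
  1 + (Tf f t k p (p 0 * (n - t * k ^ r)) (S r) + Tf f t k p (p 1 * (n - t * k ^ r)) (S r)
       + Tf f t k p (p 2 * (n - t * k ^ r)) (S r) + Tf f t k p (p 3 * (n - t * k ^ r)) (S r)).
Proof. reflexivity. Qed.

Lemma kr_pos r : 1 <= k ^ r.
Proof. apply pow_R1_Rle; lra. Qed.

Lemma child_x i n r : 0 < p i -> p i * (n - t * k ^ r) / k ^ S r = (p i / k) * (n / k ^ r - t).
Proof. intros. pose proof (kr_pos r). simpl. field. split; apply Rgt_not_eq; lra. Qed.

Lemma child_y i n r : 0 < p i -> p i * (n - t * k ^ r) / (t * k ^ S r) = (p i / k) * (n / (t * k ^ r) - 1).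
Proof. intros. pose proof (kr_pos r). simpl. field. repeat split; apply Rgt_not_eq; lra. Qed.

Lemma Tf_lower f : forall n r, n <= t * INR f -> Rpower (n / (t * k ^ r)) s <= Tf f t k p n r.
Proof.
  induction f as [|f IH]; intros n r Hn.
  - simpl. simpl in Hn. apply rp_le_1; [|lra].
    pose proof (kr_pos r). apply Rmult_le_reg_r with (t * k^r). nra.
    replace (n / (t * k ^ r) * (t * k ^ r)) with n by (field; split; apply Rgt_not_eq; lra). nra.
  - rewrite Tf_S. pose proof (kr_pos r) as Kr.
    assert (Ht : 0 < t * k ^ r) by nra.
    destruct (Rle_dec n (t * k ^ r)) as [Hle|Hgt].
    + apply rp_le_1; [|lra]. apply Rmult_le_reg_r with (t * k^r). nra.
      replace (n / (t * k ^ r) * (t * k ^ r)) with n by (field; split; apply Rgt_not_eq; lra). nra.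
    + set (y := n / (t * k ^ r)).
      assert (Hy : 1 < y).
      { unfold y. apply Rmult_lt_reg_r with (t * k^r). nra.
        replace (n / (t * k ^ r) * (t * k ^ r)) with n by (field; split; apply Rgt_not_eq; lra). lra. }
      rewrite S_INR in Hn.
      assert (C : forall i, 0 < p i < 1 -> Rpower (p i / k) s * Rpower (y - 1) s <= Tf f t k p (p i * (n - t * k ^ r)) (S r)).
      { intros i Hi. rewrite <- rp_mul by (try apply Rdiv_lt_0_compat; lra).
        unfold y; rewrite <- child_y by lra. apply IH. nra. }
      pose proof (C 0%nat h0). pose proof (C 1%nat h1). pose proof (C 2%nat h2). pose proof (C 3%nat h3).
      pose proof (subadd (y - 1) 1 s ltac:(lra) ltac:(lra) ltac:(lra)) as SA.
      rewrite rp_one in SA. replace (y - 1 + 1) with y in SA by ring.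
      assert (E : (Rpower (p 0 / k) s + Rpower (p 1 / k) s + Rpower (p 2 / k) s + Rpower (p 3 / k) s) * Rpower (y-1) s = Rpower (y-1) s) by (rewrite hq; ring).
      lra.
Qed.

Lemma Tf_bdd f : forall n r m, n / k ^ r <= t * INR m -> Tf f t k p n r <= 5 ^ m.
Proof.
  induction f as [|f IH]; intros n r m Hn.
  - simpl. apply pow_R1_Rle; lra.
  - rewrite Tf_S. pose proof (kr_pos r) as Kr.
    destruct (Rle_dec n (t * k ^ r)) as [Hle|Hgt].
    + apply pow_R1_Rle; lra.
    + set (x := n / k ^ r) in *.
      assert (Hx : t < x).
      { unfold x. apply Rmult_lt_reg_r with (k^r). lra.
        replace (n / k ^ r * k ^ r) with n by (field; apply Rgt_not_eq; lra). lra. }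
      destruct m as [|m]. { simpl in Hn. lra. }
      rewrite S_INR in Hn.
      assert (C : forall i, 0 < p i < 1 -> Tf f t k p (p i * (n - t * k ^ r)) (S r) <= 5 ^ m).
      { intros i Hi. apply IH. rewrite child_x by lra. fold x.
        assert (p i / k <= 1). { apply Rmult_le_reg_r with k. lra.
          replace (p i / k * k) with (p i) by (field; apply Rgt_not_eq; lra). lra. }
        assert (0 < p i / k) by (apply Rdiv_lt_0_compat; lra). nra. }
      pose proof (C 0%nat h0). pose proof (C 1%nat h1). pose proof (C 2%nat h2). pose proof (C 3%nat h3).
      simpl. pose proof (pow_R1_Rle 5 m ltac:(lra)). lra.
Qed.

Variables (qm A : R) (M : nat).
Hypotheses (hqm : 0 < qm) (hq0 : qm <= p 0 / k) (hq1 : qm <= p 1 / k) (hq2 : qm <= p 2 / k) (hq3 : qm <= p 3 / k)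
  (hM : t + 1 <= t * INR M) (hA : A * Rpower qm s = 5 ^ M + /3) (hA0 : 0 < A).

Lemma Tf_upper f : forall n r, qm <= n / k ^ r -> Tf f t k p n r <= A * Rpower (n / k ^ r) s - /3.
Proof.
  intros n r Hx.
  assert (Mono : A * Rpower qm s <= A * Rpower (n / k ^ r) s).
  { apply Rmult_le_compat_l. lra. apply Rle_Rpower_l; lra. }
  pose proof (pow_R1_Rle 5 M ltac:(lra)) as P5.
  revert n r Hx Mono. induction f as [|f IH]; intros n r Hx Mono.
  - simpl. lra.
  - pose proof (kr_pos r) as Kr. set (x := n / k ^ r) in *.
    destruct (Rle_dec x (t + 1)) as [Hs|Hb].
    + pose proof (Tf_bdd (S f) n r M ltac:(unfold x in Hs; lra)). lra.
    + rewrite Tf_S.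
      destruct (Rle_dec n (t * k ^ r)) as [Hle|Hgt].
      { exfalso. assert (x <= t); [|lra]. unfold x. apply Rmult_le_reg_r with (k^r). lra.
        replace (n / k ^ r * k ^ r) with n by (field; apply Rgt_not_eq; lra). lra. }
      assert (C : forall i, 0 < p i < 1 -> qm <= p i / k -> Tf f t k p (p i * (n - t * k ^ r)) (S r) <= A * (Rpower (p i / k) s * Rpower (x - t) s) - /3).
      { intros i Hi Hqi.
        assert (Hc : qm <= p i * (n - t * k ^ r) / k ^ S r).
        { rewrite child_x by lra. fold x. nra. }
        rewrite <- rp_mul by (try apply Rdiv_lt_0_compat; lra).
        unfold x; rewrite <- child_x by lra. apply IH. exact Hc.
        apply Rmult_le_compat_l. lra. apply Rle_Rpower_l; lra. }
      pose proof (C 0%nat h0 hq0). pose proof (C 1%nat h1 hq1). pose proof (C 2%nat h2 hq2). pose proof (C 3%nat h3 hq3).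
      assert (E : (Rpower (p 0 / k) s + Rpower (p 1 / k) s + Rpower (p 2 / k) s + Rpower (p 3 / k) s) * Rpower (x-t) s = Rpower (x-t) s) by (rewrite hq; ring).
      assert (Rpower (x - t) s <= Rpower x s) by (apply Rle_Rpower_l; lra).
      nra.
Qed.
End Tree.

Lemma up_nat x : 0 < x -> x <= INR (Z.to_nat (up x)).
Proof.
  intros Hx. destruct (archimed x) as [H1 _].
  assert (0 <= up x)%Z. { apply le_IZR. lra. }
  rewrite INR_IZR_INZ, Z2Nat.id by lia. lra.
Qed.

Theorem theorem2 (t k : R) (p : nat -> R)
  (ht : 0 < t) (hk : 1 <= k)
  (hp : forall i : nat, (i <= 3)%nat -> 0 < p i < 1)
  (hsum : sum_f_R0 p 3%nat = 1) :
  exists s : R,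
    0 < s /\ s <= ln 4 / ln (4 * k) /\
    sum_f_R0 (fun i => Rpower (p i) s) 3 = Rpower k s /\
    exists c1 c2 N0 : R, 0 < c1 /\ 0 < c2 /\
      forall N : R, N0 <= N ->
        c1 * Rpower N s <= T t k p N 0 <= c2 * Rpower N s.
Proof.
  pose proof (hp 0%nat ltac:(lia)) as h0. pose proof (hp 1%nat ltac:(lia)) as h1.
  pose proof (hp 2%nat ltac:(lia)) as h2. pose proof (hp 3%nat ltac:(lia)) as h3.
  simpl in hsum.
  destruct (exists_s k (p 0%nat) (p 1%nat) (p 2%nat) (p 3%nat) hk ltac:(lra) ltac:(lra) ltac:(lra) ltac:(lra) hsum)
    as [s [Hs Es]].
  exists s. split; [lra|]. split.
  { apply (s_bound k (p 0%nat) (p 1%nat) (p 2%nat) (p 3%nat)); auto; lra. }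
  split. { simpl. exact Es. }
  assert (Hk : 0 < /k) by (apply Rinv_0_lt_compat; lra).
  assert (hq : Rpower (p 0%nat / k) s + Rpower (p 1%nat / k) s + Rpower (p 2%nat / k) s + Rpower (p 3%nat / k) s = 1).
  { unfold Rdiv. rewrite !rp_mul by lra.
    replace (Rpower (p 0%nat) s * Rpower (/ k) s + Rpower (p 1%nat) s * Rpower (/ k) s +
      Rpower (p 2%nat) s * Rpower (/ k) s + Rpower (p 3%nat) s * Rpower (/ k) s)
      with ((Rpower (p 0%nat) s + Rpower (p 1%nat) s + Rpower (p 2%nat) s + Rpower (p 3%nat) s) * Rpower (/ k) s) by ring.
    rewrite Es, <- rp_mul by lra. rewrite Rinv_r by (apply Rgt_not_eq; lra). apply rp_one. }
  set (qm := p 0%nat * p 1%nat * p 2%nat * p 3%nat / k).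
  assert (Hqm : 0 < qm) by (unfold qm; apply Rdiv_lt_0_compat; [|lra];
    repeat apply Rmult_lt_0_compat; lra).
  assert (HP : forall a b c d, 0 < a < 1 -> 0 < b < 1 -> 0 < c < 1 -> 0 < d < 1 -> a * b * c * d <= a).
  { intros a b c d Ha Hb Hc Hd. assert (0 < b*c < 1) by (split; nra).
    assert (0 < b*c*d < 1) by (split; nra). nra. }
  assert (Qi : forall x, p 0%nat * p 1%nat * p 2%nat * p 3%nat <= x -> qm <= x / k).
  { intros x Hx. unfold qm, Rdiv. apply Rmult_le_compat_r; lra. }
  assert (hq0 : qm <= p 0%nat / k) by (apply Qi; apply HP; auto).
  assert (hq1 : qm <= p 1%nat / k) by (apply Qi; replace (p 0%nat * p 1%nat * p 2%nat * p 3%nat) with (p 1%nat * p 0%nat * p 2%nat * p 3%nat) by ring; apply HP; auto).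
  assert (hq2 : qm <= p 2%nat / k) by (apply Qi; replace (p 0%nat * p 1%nat * p 2%nat * p 3%nat) with (p 2%nat * p 0%nat * p 1%nat * p 3%nat) by ring; apply HP; auto).
  assert (hq3 : qm <= p 3%nat / k) by (apply Qi; replace (p 0%nat * p 1%nat * p 2%nat * p 3%nat) with (p 3%nat * p 0%nat * p 1%nat * p 2%nat) by ring; apply HP; auto).
  set (M := Z.to_nat (up ((t + 1) / t))).
  assert (hM : t + 1 <= t * INR M).
  { pose proof (up_nat ((t+1)/t) ltac:(apply Rdiv_lt_0_compat; lra)) as HH. fold M in HH.
    replace (t + 1) with (t * ((t+1)/t)) at 1 by (field; apply Rgt_not_eq; lra). nra. }
  set (A := (5 ^ M + /3) / Rpower qm s).
  pose proof (rp_pos qm s) as Pq.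
  assert (P5 : 1 <= 5 ^ M) by (apply pow_R1_Rle; lra).
  assert (hA : A * Rpower qm s = 5 ^ M + /3) by (unfold A; field; apply Rgt_not_eq; lra).
  assert (hA0 : 0 < A) by (unfold A; apply Rdiv_lt_0_compat; lra).
  exists (Rpower (/t) s), A, 1. split; [apply rp_pos|]. split; [exact hA0|].
  intros N HN. unfold T.
  set (F := (Z.to_nat (up (N / t)) + 1)%nat).
  split.
  - assert (HF : N <= t * INR F).
    { unfold F. rewrite plus_INR. pose proof (up_nat (N/t) ltac:(apply Rdiv_lt_0_compat; lra)) as HH.
      replace N with (t * (N/t)) at 1 by (field; apply Rgt_not_eq; lra). simpl INR. nra. }
    pose proof (Tf_lower t k s p ht hk Hs h0 h1 h2 h3 hq F N 0 HF) as L.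
    replace (t * k ^ 0) with t in L by (simpl; ring).
    unfold Rdiv in L. rewrite rp_mul in L by (try apply Rinv_0_lt_compat; lra). lra.
  - assert (Hx : qm <= N / k ^ 0).
    { replace (N / k ^ 0) with N by (simpl; field). 
      assert (p 0%nat / k <= p 0%nat). { apply Rmult_le_reg_r with k. lra.
          replace (p 0%nat / k * k) with (p 0%nat) by (field; apply Rgt_not_eq; lra). nra. }
      lra. }
    pose proof (Tf_upper t k s p ht hk Hs h0 h1 h2 h3 hq qm A M Hqm hq0 hq1 hq2 hq3 hM hA hA0 F N 0 Hx) as U.
    replace (N / k ^ 0) with N in U by (simpl; field). lra.
Qed.
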